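(* Assume that a collection of nonnegative real numbers $\{\mu_n(a,k) : n\ge 0,\ a\in\{0,1\},\ k\in\mathbb{Z}\}$ satisfies, for all $n\ge 0$: (P1) for $a\in\{0,1\}$, $k\mapsto\mu_n(a,k)$ is $2^n$-periodic, i.e. $\mu_n(a,k)=\mu_n(a,k')$ whenever $k\equiv k'\pmod{2^n}$; (P2) letting $q_n$ denote an integer inverse of $3$ modulo $2^{n+1}$, for all $k\in\mathbb{Z}$ and $a\in\{0,1\}$, \[ \tfrac32\,\mu_n(a,k)=\mu_{n+1}(a,2q_nk)+\mu_{n+1}(\bar a,2q_nk-q_n)+\mu_{n+1}(a,2q_nk-2q_n), \] where $\bar a=1-a$; (P3) for all $k\in\mathbb{Z}$, $\mu_n(0,k)+\mu_n(1,k)=2^{-n}$. Then $\mu_n(a,k)=2^{-n-1}$ for all $n\ge 0$, $a\in\{0,1\}$ and $k\in\mathbb{Z}$. *)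

(* Defs.v *)
From Stdlib Require Import Reals ZArith.
Open Scope R_scope.

(* a \in {0,1} is encoded as bool: false = 0, true = 1; bar a = negb a. *)
Definition P1 (mu : nat -> bool -> Z -> R) : Prop :=
  forall n a k k', Z.modulo k (2 ^ Z.of_nat n) = Z.modulo k' (2 ^ Z.of_nat n) ->
    mu n a k = mu n a k'.

Definition inv3_mod (n : nat) (q : Z) : Prop :=
  Z.modulo (3 * q) (2 ^ Z.of_nat (S n)) = 1%Z.

Definition P2 (mu : nat -> bool -> Z -> R) : Prop :=
  forall n q, inv3_mod n q -> forall k a,
    3 / 2 * mu n a k =
      mu (S n) a (2 * q * k)%Z + mu (S n) (negb a) (2 * q * k - q)%Z
      + mu (S n) a (2 * q * k - 2 * q)%Z.

Definition P3 (mu : nat -> bool -> Z -> R) : Prop :=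
  forall n k, mu n false k + mu n true k = / 2 ^ n.

(* Main.v *)
Require Import Defs.
From Stdlib Require Import Reals ZArith.
From Stdlib Require Import Lra Lia List Permutation.
Open Scope R_scope.

Definition sumL (f : Z -> R) (l : list Z) : R := fold_right (fun x a => f x + a) 0 l.
Definition zr (n : nat) : list Z := map Z.of_nat (seq 0 n).
Definition SS (f : Z -> R) (n : nat) : R := sumL f (zr n).

Lemma sumL_app f l1 l2 : sumL f (l1 ++ l2) = sumL f l1 + sumL f l2.
Proof. induction l1; simpl; [lra|rewrite IHl1; lra]. Qed.

Lemma sumL_perm f l l' : Permutation l l' -> sumL f l = sumL f l'.
Proof. induction 1; simpl; lra. Qed.

Lemma sumL_lin a b f g l :
  sumL (fun x => a * f x + b * g x) l = a * sumL f l + b * sumL g l.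
Proof. induction l; simpl; [lra|rewrite IHl; lra]. Qed.

Lemma sumL_ext f g l : (forall x, f x = g x) -> sumL f l = sumL g l.
Proof. intro H; induction l; simpl; [lra|rewrite IHl, H; lra]. Qed.

Lemma sumL_le f g l : (forall x, f x <= g x) -> sumL f l <= sumL g l.
Proof. intro H; induction l; simpl; [lra|specialize (H a); lra]. Qed.

Lemma sumL_map f g l : sumL f (map g l) = sumL (fun x => f (g x)) l.
Proof. induction l; simpl; [lra|rewrite IHl; lra]. Qed.

Lemma sumL_const c l : sumL (fun _ => c) l = INR (length l) * c.
Proof. induction l; simpl length; [simpl; lra|]. rewrite S_INR; simpl; rewrite IHl; lra. Qed.

Lemma sumL_ge_term f l x : (forall y, 0 <= f y) -> In x l -> f x <= sumL f l.
Proof.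
  intros H; induction l as [|a l IH]; simpl; [tauto|].
  intros [<-|Hin]. - assert (0 <= sumL f l) by (clear IH; induction l; simpl; [lra|specialize (H a0); lra]); lra.
  - specialize (IH Hin); specialize (H a); lra.
Qed.

Lemma sumL_single f x : sumL f (x :: nil) = f x.
Proof. simpl; lra. Qed.

Lemma zr_S n : zr (S n) = zr n ++ (Z.of_nat n :: nil).
Proof. unfold zr; rewrite seq_S, map_app; reflexivity. Qed.

Lemma in_zr n x : In x (zr n) <-> (0 <= x < Z.of_nat n)%Z.
Proof.
  unfold zr; rewrite in_map_iff; split.
  - intros [y [<- Hy]]; apply in_seq in Hy; lia.
  - intros H; exists (Z.to_nat x); split; [lia|]. apply in_seq; lia.
Qed.

Lemma zr_length n : length (zr n) = n.
Proof. unfold zr; rewrite length_map, length_seq; reflexivity. Qed.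

Lemma zr_NoDup n : NoDup (zr n).
Proof. unfold zr; apply FinFun.Injective_map_NoDup; [intros a b; lia|apply seq_NoDup]. Qed.

Lemma SS_double f n : SS f (2 * n) = SS (fun k => f (2 * k)%Z + f (2 * k + 1)%Z) n.
Proof.
  induction n; unfold SS.
  - reflexivity.
  - replace (2 * S n)%nat with (S (S (2 * n))) by lia.
    rewrite !zr_S, !sumL_app. unfold SS in IHn; rewrite IHn, !sumL_single.
    replace (Z.of_nat (S (2*n))) with (2 * Z.of_nat n + 1)%Z by lia.
    replace (Z.of_nat (2*n)) with (2 * Z.of_nat n)%Z by lia. lra.
Qed.

Lemma NoDup_map_inj {A B} (g : A -> B) l :
  NoDup l -> (forall x y, In x l -> In y l -> g x = g y -> x = y) -> NoDup (map g l).
Proof.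
  induction 1 as [|a l Ha Hl IH]; intros Hi; simpl; constructor.
  - intro Hin. apply in_map_iff in Hin. destruct Hin as [y [Hy Hyl]].
    assert (y = a) by (apply Hi; simpl; auto). subst; auto.
  - apply IH; intros; apply Hi; simpl; auto.
Qed.

Lemma SS_reindex f N a b c :
  (0 < N)%nat -> (forall x, f x = f (x mod Z.of_nat N)%Z) -> ((a * b) mod Z.of_nat N = 1 mod Z.of_nat N)%Z ->
  SS (fun i => f (a * i + c)%Z) N = SS f N.
Proof.
  intros HN Hf Hab. set (M := Z.of_nat N) in *.
  assert (HM : (0 < M)%Z) by lia.
  unfold SS.
  transitivity (sumL f (map (fun i => ((a * i + c) mod M)%Z) (zr N))).
  { rewrite sumL_map. apply sumL_ext. intro; apply Hf. }
  apply sumL_perm, NoDup_Permutation_bis.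
  - apply NoDup_map_inj; [apply zr_NoDup|].
    intros x y Hx Hy E. apply in_zr in Hx, Hy. fold M in Hx, Hy.
    assert (E2 : (((a * x + c) - (a * y + c)) mod M = 0)%Z).
    { rewrite Zminus_mod, E, Z.sub_diag. reflexivity. }
    assert (E3 : ((b * ((a * x + c) - (a * y + c))) mod M = 0)%Z).
    { rewrite Zmult_mod, E2, Z.mul_0_r. reflexivity. }
    replace (b * (a * x + c - (a * y + c)))%Z with ((a * b) * (x - y))%Z in E3 by ring.
    rewrite Zmult_mod, Hab, <- Zmult_mod, Z.mul_1_l in E3.
    apply Z.mod_divide in E3; [|lia]. destruct E3 as [t Ht].
    assert (t = 0)%Z by nia. subst; lia.
  - rewrite length_map; lia.
  - intros x Hx. apply in_map_iff in Hx. destruct Hx as [i [<- _]].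
    apply in_zr. fold M. apply Z.mod_pos_bound; lia.
Qed.

Definition Hf (m2 m1 y0 y1 y2 : R) : R :=
  (-2)*(m2*y0) + (-50/9)*(m1*m1) + (40/9)*(m2*m1) + (-29/9)*(m2*m2)
  + (9/5)*(m1*y2) + (9/5)*(m2*y1) + y0*y0.

Definition SOSf (m2 m1 y0 y1 y2 : R) : R :=
  (1)*Rsqr((1)*m2 + (-1)*y0 + (-101/90)*y1 + (2/9)*y2) + (10/3)*Rsqr((1)*m1 + (3/5)*y0 + (1/15)*y1 + (-101/300)*y2) + (4/5)*Rsqr((1)*y0 + (67/72)*y1 + (53/360)*y2) + (591/400)*Rsqr((1)*y1 + (6953/47871)*y2) + (406595089/775510200)*Rsqr((1)*y2).

Lemma SOSf_nonneg m2 m1 y0 y1 y2 : 0 <= SOSf m2 m1 y0 y1 y2.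
Proof.
  unfold SOSf.
  repeat apply Rplus_le_le_0_compat; apply Rmult_le_pos; try lra; apply Rle_0_sqr.
Qed.

Lemma cert (m2 m1 y0 y1 y2 y3 y4 : R) :
  9*((y0*y0 - y0*y3/5) + (y1*y1 - y1*y4/5))
  + (-20)*(((y0 - m1 + m2)/3)*((y0 - m1 + m2)/3) - ((y0 - m1 + m2)/3)*((y2 - y1 + y0)/3)/5) =
  1 * SOSf m2 m1 y0 y1 y2 + 1 * (Hf m2 m1 y0 y1 y2 - Hf y0 y1 y2 y3 y4).
Proof. unfold SOSf, Hf, Rsqr; field. Qed.

Definition u (mu : nat -> bool -> Z -> R) (n : nat) (k : Z) : R := 2 ^ (S n) * mu n false k - 1.

Lemma inv3_ex n : exists q, inv3_mod n q.
Proof.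
  unfold inv3_mod. induction n.
  - exists 1%Z. reflexivity.
  - destruct IHn as [q Hq].
    set (M := (2 ^ Z.of_nat (S n))%Z) in *.
    assert (HM : (2 <= M)%Z).
    { unfold M. rewrite Nat2Z.inj_succ, Z.pow_succ_r by lia.
      assert (0 < 2 ^ Z.of_nat n)%Z by (apply Z.pow_pos_nonneg; lia). lia. }
    assert (E2 : (2 ^ Z.of_nat (S (S n)) = 2 * M)%Z).
    { unfold M. rewrite (Nat2Z.inj_succ (S n)), Z.pow_succ_r by lia. reflexivity. }
    rewrite E2.
    assert (Hd := Z.div_mod (3 * q) M ltac:(lia)). rewrite Hq in Hd.
    set (t := ((3 * q) / M)%Z) in *.
    destruct (Z.Even_or_Odd t) as [[s Hs]|[s Hs]].
    + exists q. rewrite Hd, Hs.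
      replace (M * (2 * s) + 1)%Z with (1 + s * (2 * M))%Z by ring.
      rewrite Z_mod_plus_full. apply Z.mod_1_l. lia.
    + exists (q + M)%Z.
      replace (3 * (q + M))%Z with (1 + (s + 2) * (2 * M))%Z by (rewrite Z.mul_add_distr_l, Hd, Hs; ring).
      rewrite Z_mod_plus_full. apply Z.mod_1_l. lia.
Qed.

Lemma u_cong mu : P1 mu -> forall n x y,
  (x mod 2 ^ Z.of_nat n = y mod 2 ^ Z.of_nat n)%Z -> u mu n x = u mu n y.
Proof. intros H1 n x y E; unfold u; rewrite (H1 n false x y E); reflexivity. Qed.

Lemma pow2_pos n : (0 < 2 ^ Z.of_nat n)%Z.
Proof. apply Z.pow_pos_nonneg; lia. Qed.

Lemma u_bound mu : (forall n a k, 0 <= mu n a k) -> P3 mu -> forall n k,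
  -1 <= u mu n k <= 1.
Proof.
  intros H0 H3 n k. unfold u. simpl pow.
  assert (Hp : 0 < 2 ^ n) by (apply pow_lt; lra).
  specialize (H3 n k). assert (h1 := H0 n false k). assert (h2 := H0 n true k).
  assert (E : 2 ^ n * mu n false k + 2 ^ n * mu n true k = 1).
  { rewrite <- Rmult_plus_distr_l, H3. field. lra. }
  assert (0 <= 2 ^ n * mu n true k) by (apply Rmult_le_pos; lra).
  assert (0 <= 2 ^ n * mu n false k) by (apply Rmult_le_pos; lra).
  lra.
Qed.

Lemma u_rec mu : P2 mu -> P3 mu -> forall n q, inv3_mod n q -> forall k,
  3 * u mu n k = u mu (S n) (2 * q * k) - u mu (S n) (2 * q * k - q) + u mu (S n) (2 * q * k - 2 * q).
Proof.
  intros H2 H3 n q Hq k. unfold u.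
  specialize (H2 n q Hq k false). simpl negb in H2.
  specialize (H3 (S n) (2 * q * k - q)%Z).
  set (a := mu (S n) false (2 * q * k)%Z) in *.
  set (b := mu (S n) false (2 * q * k - q)%Z) in *.
  set (b' := mu (S n) true (2 * q * k - q)%Z) in *.
  set (c := mu (S n) false (2 * q * k - 2 * q)%Z) in *.
  set (m := mu n false k) in *.
  simpl pow in *.
  assert (Hp : 0 < 2 ^ n) by (apply pow_lt; lra).
  assert (Eb : b' = / (2 * 2 ^ n) - b) by lra.
  rewrite Eb in H2.
  assert (E4 : 4 * 2 ^ n * (3 / 2 * m) = 4 * 2 ^ n * (a + (/ (2 * 2 ^ n) - b) + c)) by (rewrite H2; reflexivity).
  replace (4 * 2 ^ n * (a + (/ (2 * 2 ^ n) - b) + c)) with (4 * 2 ^ n * a - 4 * 2^n * b + 4 * 2^n * c + 2) in E4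
    by (field; lra).
  lra.
Qed.

Definition Q mu n := SS (fun k => u mu n k * u mu n k - u mu n k * u mu n (k + 1) / 5) (2 ^ n).

Lemma Z_of_pow2 n : Z.of_nat (2 ^ n) = (2 ^ Z.of_nat n)%Z.
Proof. rewrite Nat2Z.inj_pow. reflexivity. Qed.

Lemma INR_pow2 n : INR (2 ^ n) = 2 ^ n.
Proof. rewrite pow_INR. reflexivity. Qed.

Lemma pow2_nat_pos n : (0 < 2 ^ n)%nat.
Proof. apply Nat.neq_0_lt_0, Nat.pow_nonzero; lia. Qed.

Lemma u_mod mu : P1 mu -> forall n x, u mu n x = u mu n (x mod Z.of_nat (2 ^ n))%Z.
Proof.
  intros H1 n x. rewrite Z_of_pow2. apply u_cong; auto.
  rewrite Z.mod_mod; [reflexivity|]. assert (h := pow2_pos n); lia.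
Qed.

Lemma u_mod1 mu : P1 mu -> forall n x, u mu n (x + 1) = u mu n (x mod Z.of_nat (2 ^ n) + 1)%Z.
Proof.
  intros H1 n x. rewrite Z_of_pow2. apply u_cong; auto.
  assert (h := pow2_pos n).
  rewrite (Zplus_mod (x mod _) 1), Z.mod_mod, <- Zplus_mod by lia. reflexivity.
Qed.

Lemma Q_upper mu : (forall n a k, 0 <= mu n a k) -> P3 mu -> forall n, Q mu n <= 6 / 5 * 2 ^ n.
Proof.
  intros H0 H3 n. unfold Q, SS.
  eapply Rle_trans.
  - apply (sumL_le _ (fun _ => 6 / 5)). intro x.
    assert (h1 := u_bound mu H0 H3 n x). assert (h2 := u_bound mu H0 H3 n (x + 1)).
    nra.
  - rewrite sumL_const, zr_length, INR_pow2. lra.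
Qed.

Lemma Q_lower mu : (forall n a k, 0 <= mu n a k) -> P1 mu -> P3 mu -> forall n k,
  4 / 5 * (u mu n k * u mu n k) <= Q mu n.
Proof.
  intros H0 H1 H3 n k. unfold Q.
  set (g := fun x => u mu n x * u mu n x).
  assert (Hs : SS (fun x => g (1 * x + 1)%Z) (2 ^ n) = SS g (2 ^ n)).
  { apply (SS_reindex g (2 ^ n) 1 1 1). apply pow2_nat_pos.
    intro x; unfold g; rewrite <- (u_mod mu H1); reflexivity. reflexivity. }
  assert (Hl : SS (fun x => 9/10 * g x + (-1/10) * g (1 * x + 1)%Z) (2 ^ n) <=
               SS (fun k => u mu n k * u mu n k - u mu n k * u mu n (k + 1) / 5) (2 ^ n)).
  { apply sumL_le. intro x. unfold g. rewrite Z.mul_1_l.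
    set (a := u mu n x). set (b := u mu n (x + 1)).
    assert (0 <= (a - b) * (a - b)) by apply Rle_0_sqr. nra. }
  unfold SS in Hl, Hs. rewrite sumL_lin in Hl. rewrite Hs in Hl.
  assert (Ht : g (k mod Z.of_nat (2 ^ n))%Z <= SS g (2 ^ n)).
  { apply sumL_ge_term. intro; unfold g; nra.
    apply in_zr. apply Z.mod_pos_bound. apply (Nat2Z.inj_lt 0). apply pow2_nat_pos. }
  unfold SS in Ht. unfold g in Ht at 1. rewrite <- (u_mod mu H1) in Ht. unfold SS. lra.
Qed.

Lemma Q_step mu : P1 mu -> P2 mu -> P3 mu -> forall n, Q mu n <= 9 / 20 * Q mu (S n).
Proof.
  intros H1 H2 H3 n.
  destruct (inv3_ex n) as [q Hq].
  assert (Hq' := Hq). unfold inv3_mod in Hq'.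
  set (N := (2 ^ Z.of_nat n)%Z).
  set (M := (2 ^ Z.of_nat (S n))%Z) in *.
  assert (HN : (0 < N)%Z) by apply pow2_pos.
  assert (HMN : M = (2 * N)%Z).
  { unfold M, N. rewrite Nat2Z.inj_succ, Z.pow_succ_r by lia. reflexivity. }
  set (w := fun m => u mu (S n) (q * m)%Z).
  set (Y := fun k o => w (2 * k + o)%Z).
  assert (HT : forall k, u mu n k = (Y k 0%Z - Y k (-1)%Z + Y k (-2)%Z) / 3).
  { intro k. assert (E := u_rec mu H2 H3 n q Hq k). unfold Y, w.
    replace (q * (2 * k + 0))%Z with (2 * q * k)%Z by ring.
    replace (q * (2 * k + -1))%Z with (2 * q * k - q)%Z by ring.
    replace (q * (2 * k + -2))%Z with (2 * q * k - 2 * q)%Z by ring. lra. }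
  assert (HT1 : forall k, u mu n (k + 1) = (Y k 2%Z - Y k 1%Z + Y k 0%Z) / 3).
  { intro k. assert (E := u_rec mu H2 H3 n q Hq (k + 1)). unfold Y, w.
    replace (q * (2 * k + 2))%Z with (2 * q * (k + 1))%Z by ring.
    replace (q * (2 * k + 1))%Z with (2 * q * (k + 1) - q)%Z by ring.
    replace (q * (2 * k + 0))%Z with (2 * q * (k + 1) - 2 * q)%Z by ring. lra. }
  assert (HA : Q mu (S n) = SS (fun m => w m * w m - w m * w (m + 3)%Z / 5) (2 ^ S n)).
  { unfold Q.
    rewrite <- (SS_reindex (fun k => u mu (S n) k * u mu (S n) k - u mu (S n) k * u mu (S n) (k + 1) / 5)
                  (2 ^ S n) q 3 0).
    - unfold SS. apply sumL_ext. intro i. cbv beta. rewrite Z.add_0_r. unfold w.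
      rewrite (u_cong mu H1 (S n) (q * i + 1) (q * (i + 3))). reflexivity.
      fold M. rewrite Z.mul_add_distr_l, (Zplus_mod (q * i) (q * 3)), (Z.mul_comm q 3), Hq'.
      rewrite (Zplus_mod (q * i)), (Z.mod_1_l M) by lia. reflexivity.
    - apply pow2_nat_pos.
    - intro x. cbv beta. rewrite <- (u_mod mu H1 (S n) x), <- (u_mod1 mu H1 (S n) x). reflexivity.
    - rewrite Z_of_pow2. fold M. rewrite Z.mul_comm, Hq', Z.mod_1_l by lia. reflexivity. }
  rewrite HA, Nat.pow_succ_r', SS_double.
  assert (HY : forall k o, Y k o = Y (k mod Z.of_nat (2 ^ n))%Z o).
  { intros k o. rewrite Z_of_pow2. fold N. unfold Y, w. apply u_cong; auto. fold M.
    assert (Hk := Z.div_mod k N ltac:(lia)).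
    replace (q * (2 * k + o))%Z with (q * (2 * (N * (k / N) + k mod N) + o))%Z
      by (rewrite <- Hk; reflexivity).
    replace (q * (2 * (N * (k / N) + k mod N) + o))%Z with (q * (2 * (k mod N) + o) + (q * (k / N)) * M)%Z
      by (rewrite HMN; ring).
    apply Z_mod_plus_full. }
  set (hh := fun k => Hf (Y k (-2)%Z) (Y k (-1)%Z) (Y k 0%Z) (Y k 1%Z) (Y k 2%Z)).
  assert (Ysucc : forall k o, Y (k + 1)%Z o = Y k (o + 2)%Z).
  { intros k o. unfold Y. f_equal. ring. }
  assert (Hh1 : forall k, hh (1 * k + 1)%Z = Hf (Y k 0%Z) (Y k 1%Z) (Y k 2%Z) (Y k 3%Z) (Y k 4%Z)).
  { intro k. unfold hh. rewrite Z.mul_1_l, !Ysucc. reflexivity. }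
  assert (Hhs : SS (fun k => hh (1 * k + 1)%Z) (2 ^ n) = SS hh (2 ^ n)).
  { apply (SS_reindex hh (2 ^ n) 1 1 1). apply pow2_nat_pos.
    intro x. unfold hh. rewrite <- !HY. reflexivity. reflexivity. }
  set (Rk := fun k => (Y k 0%Z * Y k 0%Z - Y k 0%Z * Y k 3%Z / 5) + (Y k 1%Z * Y k 1%Z - Y k 1%Z * Y k 4%Z / 5)).
  set (Lk := fun k => ((Y k 0%Z - Y k (-1)%Z + Y k (-2)%Z) / 3) * ((Y k 0%Z - Y k (-1)%Z + Y k (-2)%Z) / 3)
                      - ((Y k 0%Z - Y k (-1)%Z + Y k (-2)%Z) / 3) * ((Y k 2%Z - Y k 1%Z + Y k 0%Z) / 3) / 5).
  assert (EQn : Q mu n = SS Lk (2 ^ n)).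
  { unfold Q, SS. apply sumL_ext. intro k. rewrite HT1, HT. reflexivity. }
  assert (ERn : SS (fun k => (w (2 * k)%Z * w (2 * k)%Z - w (2 * k)%Z * w (2 * k + 3)%Z / 5) +
                (w (2 * k + 1)%Z * w (2 * k + 1)%Z - w (2 * k + 1)%Z * w (2 * k + 1 + 3)%Z / 5)) (2 ^ n)
                = SS Rk (2 ^ n)).
  { unfold SS. apply sumL_ext. intro k. unfold Rk, Y.
    rewrite Z.add_0_r. replace (2 * k + 1 + 3)%Z with (2 * k + 4)%Z by ring. reflexivity. }
  rewrite ERn, EQn.
  assert (Key : 0 <= SS (fun k => 9 * Rk k + (-20) * Lk k) (2 ^ n)).
  { replace (SS (fun k => 9 * Rk k + (-20) * Lk k) (2 ^ n)) with
      (SS (fun k => 1 * SOSf (Y k (-2)%Z) (Y k (-1)%Z) (Y k 0%Z) (Y k 1%Z) (Y k 2%Z)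
                               + 1 * (hh k - hh (1 * k + 1)%Z)) (2 ^ n)).
    2:{ symmetry. unfold SS. apply sumL_ext. intro k. rewrite Hh1. unfold hh, Rk, Lk. apply cert. }
    unfold SS. rewrite sumL_lin.
      assert (E0 : sumL (fun k => hh k - hh (1 * k + 1)%Z) (zr (2 ^ n)) = 0).
      { transitivity (sumL (fun k => 1 * hh k + (-1) * hh (1 * k + 1)%Z) (zr (2 ^ n))).
        apply sumL_ext; intro; lra.
        rewrite sumL_lin. unfold SS in Hhs. rewrite Hhs. lra. }
      rewrite E0.
      assert (0 <= sumL (fun k => SOSf (Y k (-2)%Z) (Y k (-1)%Z) (Y k 0%Z) (Y k 1%Z) (Y k 2%Z)) (zr (2 ^ n))).
      { apply Rle_trans with (sumL (fun _ => 0) (zr (2 ^ n))).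
        rewrite sumL_const; lra. apply sumL_le; intro; apply SOSf_nonneg. }
      lra. }
  unfold SS in Key. rewrite sumL_lin in Key. unfold SS. lra.
Qed.

Theorem proposition20 (mu : nat -> bool -> Z -> R) :
  (forall n a k, 0 <= mu n a k) ->
  P1 mu -> P2 mu -> P3 mu ->
  forall n a k, mu n a k = / 2 ^ (S n).
Proof.
  intros H0 H1 H2 H3 n a k.
  assert (Hit : forall m, Q mu n <= (9 / 20) ^ m * Q mu (n + m)).
  { induction m.
    - rewrite Nat.add_0_r. simpl. lra.
    - rewrite Nat.add_succ_r. assert (h := Q_step mu H1 H2 H3 (n + m)).
      assert (0 <= (9 / 20) ^ m) by (apply pow_le; lra).
      simpl pow. nra. }
  assert (Hlow := Q_lower mu H0 H1 H3 n k).
  assert (Hu : u mu n k = 0).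
  { destruct (Req_dec (u mu n k) 0) as [e|ne]; [exact e|exfalso].
    assert (Hpos : 0 < u mu n k * u mu n k) by (apply Rsqr_pos_lt in ne; exact ne).
    assert (Hp : 0 < 2 ^ n) by (apply pow_lt; lra).
    destruct (pow_lt_1_zero (9 / 10) ltac:(rewrite Rabs_right; lra)
                (4 / 5 * (u mu n k * u mu n k) / (6 / 5 * 2 ^ n))) as [m Hm].
    { apply Rdiv_lt_0_compat; lra. }
    specialize (Hm m (Nat.le_refl m)).
    rewrite Rabs_right in Hm by (apply Rle_ge, pow_le; lra).
    specialize (Hit m). assert (Hup := Q_upper mu H0 H3 (n + m)).
    rewrite pow_add in Hup.
    assert (E : (9 / 20) ^ m * (6 / 5 * (2 ^ n * 2 ^ m)) = 6 / 5 * 2 ^ n * (9 / 10) ^ m).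
    { replace (9 / 10) with (9 / 20 * 2) by lra. rewrite Rpow_mult_distr. ring. }
    assert (0 <= (9 / 20) ^ m) by (apply pow_le; lra).
    assert (Q mu n <= 6 / 5 * 2 ^ n * (9 / 10) ^ m).
    { rewrite <- E. eapply Rle_trans; [exact Hit|]. apply Rmult_le_compat_l; auto. }
    apply (Rmult_lt_compat_l (6 / 5 * 2 ^ n)) in Hm; [|lra].
    replace (6 / 5 * 2 ^ n * (4 / 5 * (u mu n k * u mu n k) / (6 / 5 * 2 ^ n)))
      with (4 / 5 * (u mu n k * u mu n k)) in Hm by (field; lra).
    lra. }
  unfold u in Hu. simpl pow in *.
  assert (Hp : 0 < 2 ^ n) by (apply pow_lt; lra).
  assert (Hf0 : mu n false k = / (2 * 2 ^ n)).
  { apply (Rmult_eq_reg_l (2 * 2 ^ n)); [|lra]. rewrite Rinv_r by lra. lra. }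
  destruct a; [|exact Hf0].
  specialize (H3 n k). rewrite Hf0 in H3.
  assert (E : mu n true k = / 2 ^ n - / (2 * 2 ^ n)) by lra.
  rewrite E. field. lra.
Qed.
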